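(* A $b$-complete idempotent semimodule $V$ over a $b$-complete idempotent semiring $K$ is isomorphic to a functional $b$-semimodule (on some nonempty set) for which the kernel theorem holds if and only if the identity mapping on $V$ is a $b$-nuclear operator, i.e., $V$ is a $b$-nuclear semimodule.
   Context: Idempotent semigroup: commutative, associative, idempotent $\oplus$ with order $x\preceq y$ iff $x\oplus y=y$; $b$-complete: every bounded above subset (incl. $\emptyset$) has a least upper bound. A homomorphism of $b$-complete semigroups is a $b$-homomorphism if it preserves least upper bounds of bounded above subsets. Idempotent semiring: idempotent commutative associative $\oplus$, associative $\odot$ bi-distributive, unit $\mathbf 1$, zero $\mathbf 0$; $b$-complete if $b$-complete and $k\odot(\oplus X)=\oplus(k\odot X)$, $(\oplus X)\odot k=\oplus(X\odot k)$ for bounded $X$. Idempotent semimodule over $K$: idempotent semigroup with associative bi-distributive $K$-action, $\mathbf 1\odot x=x$, $\mathbf 0\odot x=\mathbf 0$; $b$-complete if $b$-complete as semigroup and $(\oplus Q)\odot x=\oplus(Q\odot x)$, $k\odot(\oplus X)=\oplus(k\odot X)$ for bounded $Q,X$. Linear: preserves $\oplus$ and scalar multiplication; $b$-linear: moreover a $b$-homomorphism; a $b$-linear functional is a $b$-linear map into $K$. $K(X)$: all maps $X\to K$, pointwise operations; a functional $b$-semimodule on $X$ is a subset of $K(X)$ closed under pointwise $\oplus$ and scalar multiplication, which is a $b$-complete semimodule and whose embedding into $K(X)$ is a $b$-homomorphism. A mapping $A\colon V\to W$ is integral if there is $k\colon X\to W$ with $\{f(x)\odot k(x)\mid x\in X\}$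 bounded for all $f$ and $Af=\sup_{x\in X}(f(x)\odot k(x))$; the kernel theorem holds for a functional $b$-semimodule if every $b$-linear mapping from it to any $b$-complete semimodule over $K$ is integral. A one-dimensional mapping is $v\mapsto\phi(v)\odot w$ with $\phi$ a $b$-linear functional; a $b$-nuclear mapping is the pointwise supremum of a bounded above set of one-dimensional mappings. $V$ is $b$-nuclear if every $b$-linear map from $V$ to any $b$-complete semimodule over $K$ is $b$-nuclear. *)

(* Defs.v *)
Set Implicit Arguments.
Unset Strict Implicit.

Definition ple {A : Type} (add : A -> A -> A) (x y : A) : Prop := add x y = y.

Definition upper_bound {A : Type} (add : A -> A -> A) (S : A -> Prop) (u : A) : Prop :=
  forall x, S x -> ple add x u.

Definition bounded_above {A : Type} (add : A -> A -> A) (S : A -> Prop) : Prop :=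
  exists u, upper_bound add S u.

Definition is_lub {A : Type} (add : A -> A -> A) (S : A -> Prop) (u : A) : Prop :=
  upper_bound add S u /\ forall v, upper_bound add S v -> ple add u v.

(* b-complete: every bounded above subset (including the empty one) has a lub *)
Definition b_complete_sg {A : Type} (add : A -> A -> A) : Prop :=
  forall S : A -> Prop, bounded_above add S -> exists u, is_lub add S u.

Definition image {A B : Type} (f : A -> B) (S : A -> Prop) : B -> Prop :=
  fun y => exists x, S x /\ y = f x.

Definition b_hom {A B : Type} (addA : A -> A -> A) (addB : B -> B -> B) (f : A -> B) : Prop :=
  forall (S : A -> Prop) (u : A), bounded_above addA S -> is_lub addA S u ->
    is_lub addB (image f S) (f u).

Record BSemiring : Type := {
  sr_car :> Type;
  sr_add : sr_car -> sr_car -> sr_car;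
  sr_mul : sr_car -> sr_car -> sr_car;
  sr_zero : sr_car;
  sr_one : sr_car;
  sr_add_comm : forall x y, sr_add x y = sr_add y x;
  sr_add_assoc : forall x y z, sr_add x (sr_add y z) = sr_add (sr_add x y) z;
  sr_add_idem : forall x, sr_add x x = x;
  sr_add_zero : forall x, sr_add sr_zero x = x;
  sr_mul_assoc : forall x y z, sr_mul x (sr_mul y z) = sr_mul (sr_mul x y) z;
  sr_mul_one_l : forall x, sr_mul sr_one x = x;
  sr_mul_one_r : forall x, sr_mul x sr_one = x;
  sr_mul_zero_l : forall x, sr_mul sr_zero x = sr_zero;
  sr_mul_zero_r : forall x, sr_mul x sr_zero = sr_zero;
  sr_distr_l : forall x y z, sr_mul x (sr_add y z) = sr_add (sr_mul x y) (sr_mul x z);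
  sr_distr_r : forall x y z, sr_mul (sr_add x y) z = sr_add (sr_mul x z) (sr_mul y z);
  sr_bcomplete : b_complete_sg sr_add;
  sr_mul_lub_l : forall k (S : sr_car -> Prop) u,
      bounded_above sr_add S -> is_lub sr_add S u ->
      is_lub sr_add (image (sr_mul k) S) (sr_mul k u);
  sr_mul_lub_r : forall k (S : sr_car -> Prop) u,
      bounded_above sr_add S -> is_lub sr_add S u ->
      is_lub sr_add (image (fun x => sr_mul x k) S) (sr_mul u k)
}.

Record BSemimodule (K : BSemiring) : Type := {
  sm_car :> Type;
  sm_add : sm_car -> sm_car -> sm_car;
  sm_zero : sm_car;
  sm_smul : K -> sm_car -> sm_car;
  sm_add_comm : forall x y, sm_add x y = sm_add y x;
  sm_add_assoc : forall x y z, sm_add x (sm_add y z) = sm_add (sm_add x y) z;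
  sm_add_idem : forall x, sm_add x x = x;
  sm_add_zero : forall x, sm_add sm_zero x = x;
  sm_smul_assoc : forall (a b : K) x, sm_smul (sr_mul (b:=K) a b) x = sm_smul a (sm_smul b x);
  sm_smul_distr_l : forall (a : K) x y, sm_smul a (sm_add x y) = sm_add (sm_smul a x) (sm_smul a y);
  sm_smul_distr_r : forall (a b : K) x, sm_smul (sr_add (b:=K) a b) x = sm_add (sm_smul a x) (sm_smul b x);
  sm_smul_one : forall x, sm_smul (sr_one K) x = x;
  sm_smul_zero : forall x, sm_smul (sr_zero K) x = sm_zero;
  sm_bcomplete : b_complete_sg sm_add;
  sm_lub_scal : forall (Q : K -> Prop) (q : K) x,
      bounded_above (sr_add (b:=K)) Q -> is_lub (sr_add (b:=K)) Q q ->
      is_lub sm_add (image (fun a => sm_smul a x) Q) (sm_smul q x);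
  sm_lub_vec : forall (k : K) (S : sm_car -> Prop) u,
      bounded_above sm_add S -> is_lub sm_add S u ->
      is_lub sm_add (image (sm_smul k) S) (sm_smul k u)
}.

Arguments sr_add : clear implicits.
Arguments sr_mul : clear implicits.
Arguments sm_add {K} b0 _ _.
Arguments sm_zero {K} b0.
Arguments sm_smul {K} b0 _ _.

Definition linear_map {K : BSemiring} {V W : BSemimodule K} (A : V -> W) : Prop :=
  (forall x y, A (sm_add V x y) = sm_add W (A x) (A y)) /\
  (forall (k : K) x, A (sm_smul V k x) = sm_smul W k (A x)).

Definition b_linear {K : BSemiring} {V W : BSemimodule K} (A : V -> W) : Prop :=
  linear_map A /\ b_hom (sm_add V) (sm_add W) A.

Definition b_linear_functional {K : BSemiring} {V : BSemimodule K} (phi : V -> K) : Prop :=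
  (forall x y, phi (sm_add V x y) = sr_add K (phi x) (phi y)) /\
  (forall (k : K) x, phi (sm_smul V k x) = sr_mul K k (phi x)) /\
  b_hom (sm_add V) (sr_add K) phi.

Definition one_dimensional {K : BSemiring} {V W : BSemimodule K} (f : V -> W) : Prop :=
  exists (phi : V -> K) (w : W), b_linear_functional phi /\ forall v, f v = sm_smul W (phi v) w.

Definition b_nuclear_map {K : BSemiring} {V W : BSemimodule K} (A : V -> W) : Prop :=
  exists S : (V -> W) -> Prop,
    (forall f, S f -> one_dimensional f) /\
    bounded_above (fun f g : V -> W => fun v => sm_add W (f v) (g v)) S /\
    (forall v, is_lub (sm_add W) (fun y => exists f, S f /\ y = f v) (A v)).

Definition b_nuclear_semimodule {K : BSemiring} (V : BSemimodule K) : Prop :=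
  forall (W : BSemimodule K) (A : V -> W), b_linear A -> b_nuclear_map A.

Definition fadd {K : BSemiring} {X : Type} (f g : X -> K) : X -> K :=
  fun x => sr_add K (f x) (g x).
Definition fsmul {K : BSemiring} {X : Type} (k : K) (f : X -> K) : X -> K :=
  fun x => sr_mul K k (f x).

Definition subset_of {A : Type} (S F : A -> Prop) : Prop := forall f, S f -> F f.

(* order notions inside the subset F (order induced from K(X)) *)
Definition bounded_in {K : BSemiring} {X : Type} (F S : (X -> K) -> Prop) : Prop :=
  exists u, F u /\ upper_bound fadd S u.
Definition lub_in {K : BSemiring} {X : Type} (F S : (X -> K) -> Prop) (u : X -> K) : Prop :=
  F u /\ upper_bound fadd S u /\ (forall v, F v -> upper_bound fadd S v -> ple fadd u v).

Definition functional_b_semimodule {K : BSemiring} {X : Type} (F : (X -> K) -> Prop) : Prop :=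
  (forall f g, F f -> F g -> F (fadd f g)) /\
  (forall (k : K) f, F f -> F (fsmul k f)) /\
  (forall S, subset_of S F -> bounded_in F S -> exists u, lub_in F S u) /\
  (forall (Q : K -> Prop) (q : K) f, F f ->
      bounded_above (sr_add K) Q -> is_lub (sr_add K) Q q ->
      lub_in F (image (fun a => fsmul a f) Q) (fsmul q f)) /\
  (forall (k : K) S u, subset_of S F -> bounded_in F S -> lub_in F S u ->
      lub_in F (image (fsmul k) S) (fsmul k u)) /\
  (* the embedding F -> K(X) is a b-homomorphism *)
  (forall S u, subset_of S F -> bounded_in F S -> lub_in F S u -> is_lub fadd S u).

Definition b_linear_on {K : BSemiring} {X : Type} {W : BSemimodule K}
    (F : (X -> K) -> Prop) (A : (X -> K) -> W) : Prop :=
  (forall f g, F f -> F g -> A (fadd f g) = sm_add W (A f) (A g)) /\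
  (forall (k : K) f, F f -> A (fsmul k f) = sm_smul W k (A f)) /\
  (forall S u, subset_of S F -> bounded_in F S -> lub_in F S u ->
      is_lub (sm_add W) (image A S) (A u)).

Definition integral_on {K : BSemiring} {X : Type} {W : BSemimodule K}
    (F : (X -> K) -> Prop) (A : (X -> K) -> W) : Prop :=
  exists k : X -> W, forall f, F f ->
    bounded_above (sm_add W) (fun w => exists x, w = sm_smul W (f x) (k x)) /\
    is_lub (sm_add W) (fun w => exists x, w = sm_smul W (f x) (k x)) (A f).

Definition kernel_theorem_holds {K : BSemiring} {X : Type} (F : (X -> K) -> Prop) : Prop :=
  forall (W : BSemimodule K) (A : (X -> K) -> W), b_linear_on F A -> integral_on F A.

Definition iso_onto {K : BSemiring} {X : Type} {V : BSemimodule K}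
    (F : (X -> K) -> Prop) (iota : V -> X -> K) : Prop :=
  (forall v, F (iota v)) /\
  (forall f, F f -> exists v, iota v = f) /\
  (forall v1 v2, iota v1 = iota v2 -> v1 = v2) /\
  (forall x y, iota (sm_add V x y) = fadd (iota x) (iota y)) /\
  (forall (k : K) x, iota (sm_smul V k x) = fsmul k (iota x)).

(* Main.v *)
Require Import Defs.
From Stdlib Require Import Classical ClassicalEpsilon FunctionalExtensionality PropExtensionality.

Lemma set_ext {A : Type} (S S' : A -> Prop) : (forall x, S x <-> S' x) -> S = S'.
Proof. intros H; apply functional_extensionality; intro x; apply propositional_extensionality; auto. Qed.

Lemma ple_trans_g {A : Type} (add : A -> A -> A)
  (assoc : forall x y z, add x (add y z) = add (add x y) z) x y z :
  ple add x y -> ple add y z -> ple add x z.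
Proof. unfold ple; intros H1 H2. rewrite <- H2, assoc, H1. reflexivity. Qed.

Lemma ple_anti_g {A : Type} (add : A -> A -> A)
  (comm : forall x y, add x y = add y x) x y :
  ple add x y -> ple add y x -> x = y.
Proof. unfold ple; intros H1 H2. rewrite <- H2 at 1. rewrite comm. exact H1. Qed.

Lemma lub_unique_g {A : Type} (add : A -> A -> A)
  (comm : forall x y, add x y = add y x) S u u' :
  is_lub add S u -> is_lub add S u' -> u = u'.
Proof.
  intros [H1 H2] [H3 H4]. apply (ple_anti_g add comm); auto.
Qed.

Lemma lub_bounded {A : Type} (add : A -> A -> A) S u : is_lub add S u -> bounded_above add S.
Proof. intros [H _]; exists u; exact H. Qed.

Lemma mono_add {A B : Type} (addA : A -> A -> A) (addB : B -> B -> B) (f : A -> B)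
  (Hf : forall x y, f (addA x y) = addB (f x) (f y)) x y :
  ple addA x y -> ple addB (f x) (f y).
Proof. unfold ple; intro H; rewrite <- Hf, H; reflexivity. Qed.

Lemma fple_iff {K : BSemiring} {X : Type} (f g : X -> K) :
  ple fadd f g <-> forall x, ple (sr_add K) (f x) (g x).
Proof.
  unfold ple, fadd; split; intro H.
  - intro x; exact (equal_f H x).
  - apply functional_extensionality; exact H.
Qed.

Lemma mple_iff {K : BSemiring} {V : Type} (W : BSemimodule K) (f g : V -> W) :
  ple (fun f g : V -> W => fun v => sm_add W (f v) (g v)) f g
  <-> forall v, ple (sm_add W) (f v) (g v).
Proof.
  unfold ple; split; intro H.
  - intro x; exact (equal_f H x).
  - apply functional_extensionality; exact H.
Qed.

Lemma id_b_linear {K : BSemiring} (V : BSemimodule K) : b_linear (V:=V) (W:=V) (fun v => v).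
Proof.
  split. split; reflexivity.
  intros S u _ H. replace (image (fun v : V => v) S) with S; [exact H|].
  apply set_ext; intro y; unfold image; split.
  - intro; exists y; auto.
  - intros [x [Hx ->]]; auto.
Qed.

Lemma nuclear_id_all {K : BSemiring} (V : BSemimodule K) :
  b_nuclear_map (fun v : V => v) -> b_nuclear_semimodule V.
Proof.
  intros [S [HS [Hb Hl]]] W A [[Aadd Asm] Ahom].
  set (S' := fun g : V -> W => exists f phi w, S f /\ b_linear_functional phi /\
             (forall v, f v = sm_smul V (phi v) w) /\
             g = fun v => sm_smul W (phi v) (A w)).
  exists S'. split; [|split].
  - intros g (f & phi & w & _ & Hphi & _ & ->). exists phi, (A w). split; auto.
  - exists A. intros g (f&phi&w&Sf&_&Hf&->). apply mple_iff; intro v.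
    rewrite <- Asm, <- Hf. apply mono_add with (addA := sm_add V); auto.
    destruct (Hl v) as [Hub _]; apply Hub; exists f; auto.
  - intro v.
    replace (fun y => exists g, S' g /\ y = g v)
      with (image A (fun y => exists f, S f /\ y = f v)).
    + apply Ahom. exact (lub_bounded _ _ _ (Hl v)). exact (Hl v).
    + apply set_ext; intro y; split.
      * intros [x [[f [Sf ->]] ->]].
        destruct (HS f Sf) as (phi & w & Hphi & Hf).
        exists (fun v => sm_smul W (phi v) (A w)); split.
        -- exists f, phi, w; auto.
        -- rewrite Hf, Asm; reflexivity.
      * intros [g [(f&phi&w&Sf&_&Hf&->) ->]].
        exists (f v); split; [exists f; auto | rewrite Hf, Asm; reflexivity].
Qed.

Lemma emb_ple {K : BSemiring} {X : Type} (V : BSemimodule K) (iota : V -> X -> K)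
  (Hadd : forall x y, iota (sm_add V x y) = fadd (iota x) (iota y))
  (Hinj : forall v1 v2, iota v1 = iota v2 -> v1 = v2) a b :
  ple fadd (iota a) (iota b) <-> ple (sm_add V) a b.
Proof.
  unfold ple; rewrite <- Hadd; split; intro H.
  - apply Hinj; exact H.
  - rewrite H; reflexivity.
Qed.

Lemma tr_fwd_lub {K : BSemiring} {X : Type} (V : BSemimodule K) (iota : V -> X -> K)
  (F : (X -> K) -> Prop) (Hrng : forall f, F f <-> exists v, iota v = f)
  (Hadd : forall x y, iota (sm_add V x y) = fadd (iota x) (iota y))
  (Hinj : forall v1 v2, iota v1 = iota v2 -> v1 = v2) T u :
  is_lub (sm_add V) T u -> lub_in F (image iota T) (iota u).
Proof.
  intros [Hub Hl]. split; [apply Hrng; eauto|split].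
  - intros y [t [Tt ->]]. apply emb_ple; auto.
  - intros v Fv Hv. destruct (proj1 (Hrng v) Fv) as [c <-].
    apply emb_ple; auto. apply Hl. intros t Tt. apply (emb_ple V iota Hadd Hinj).
    apply Hv. exists t; auto.
Qed.

Lemma tr_fwd_bdd {K : BSemiring} {X : Type} (V : BSemimodule K) (iota : V -> X -> K)
  (F : (X -> K) -> Prop) (Hrng : forall f, F f <-> exists v, iota v = f)
  (Hadd : forall x y, iota (sm_add V x y) = fadd (iota x) (iota y))
  (Hinj : forall v1 v2, iota v1 = iota v2 -> v1 = v2) T :
  bounded_above (sm_add V) T -> bounded_in F (image iota T).
Proof.
  intros [b Hb]. exists (iota b). split; [apply Hrng; eauto|].
  intros y [t [Tt ->]]. apply emb_ple; auto.
Qed.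

Lemma tr_back {K : BSemiring} {X : Type} (V : BSemimodule K) (iota : V -> X -> K)
  (F : (X -> K) -> Prop) (Hrng : forall f, F f <-> exists v, iota v = f)
  (Hadd : forall x y, iota (sm_add V x y) = fadd (iota x) (iota y))
  (Hinj : forall v1 v2, iota v1 = iota v2 -> v1 = v2) S u :
  subset_of S F -> lub_in F S (iota u) -> is_lub (sm_add V) (fun t => S (iota t)) u.
Proof.
  intros Hsub [_ [Hub Hl]]. split.
  - intros t Tt. apply (emb_ple V iota Hadd Hinj). apply Hub; auto.
  - intros c Hc. apply (emb_ple V iota Hadd Hinj). apply Hl.
    + apply Hrng; eauto.
    + intros s Ss. destruct (proj1 (Hrng s) (Hsub s Ss)) as [t <-].
      apply emb_ple; auto.
Qed.

Lemma tr_back_bdd {K : BSemiring} {X : Type} (V : BSemimodule K) (iota : V -> X -> K)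
  (F : (X -> K) -> Prop) (Hrng : forall f, F f <-> exists v, iota v = f)
  (Hadd : forall x y, iota (sm_add V x y) = fadd (iota x) (iota y))
  (Hinj : forall v1 v2, iota v1 = iota v2 -> v1 = v2) S :
  bounded_in F S -> bounded_above (sm_add V) (fun t => S (iota t)).
Proof.
  intros [b [Fb Hb]]. destruct (proj1 (Hrng b) Fb) as [c <-].
  exists c. intros t Tt. apply (emb_ple V iota Hadd Hinj). apply Hb; auto.
Qed.

Lemma img_pre {K : BSemiring} {X : Type} (V : BSemimodule K) (iota : V -> X -> K)
  (F : (X -> K) -> Prop) (Hrng : forall f, F f <-> exists v, iota v = f) S :
  subset_of S F -> image iota (fun t => S (iota t)) = S.
Proof.
  intro Hsub. apply set_ext; intro y; split.
  - intros [t [Tt ->]]; auto.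
  - intro Sy. destruct (proj1 (Hrng y) (Hsub y Sy)) as [t <-]. exists t; auto.
Qed.

Lemma pointwise_lub {K : BSemiring} {X : Type} (S : (X -> K) -> Prop) u x :
  is_lub fadd S u -> is_lub (sr_add K) (fun y => exists s, S s /\ y = s x) (u x).
Proof.
  intros [Hub Hl]. split.
  - intros y [s [Ss ->]]. exact (proj1 (fple_iff _ _) (Hub s Ss) x).
  - intros c Hc.
    set (g := fun y => if excluded_middle_informative (y = x) then c else u y).
    assert (H : ple fadd u g).
    { apply Hl. intros s Ss. apply fple_iff; intro y; unfold g.
      destruct (excluded_middle_informative (y = x)) as [->|n].
      - apply Hc; exists s; auto.
      - exact (proj1 (fple_iff _ _) (Hub s Ss) y). }
    pose proof (proj1 (fple_iff _ _) H x) as Hx. unfold g in Hx.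
    destruct (excluded_middle_informative (x = x)); [exact Hx | congruence].
Qed.

Lemma fwd1 {K : BSemiring} (V : BSemimodule K) :
  (exists (X : Type) (F : (X -> K) -> Prop) (iota : V -> X -> K),
       inhabited X /\ functional_b_semimodule F /\ kernel_theorem_holds F /\ iso_onto F iota)
  -> b_nuclear_map (fun v : V => v).
Proof.
  intros (X & F & iota & _ & Hfun & Hker & Hin & Hsurj & Hinj & Hadd & Hsmul).
  assert (Hrng : forall f, F f <-> exists v, iota v = f).
  { intro f; split; [apply Hsurj|intros [v <-]; apply Hin]. }
  destruct Hfun as (_ & _ & _ & _ & _ & Hemb).
  set (inv := fun f : X -> K => epsilon (inhabits (sm_zero V)) (fun v => iota v = f)).
  assert (Hinv : forall v, inv (iota v) = v).
  { intro v. apply Hinj. unfold inv. apply (epsilon_spec (inhabits (sm_zero V)) (fun w => iota w = iota v)).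
    eauto. }
  assert (HA : b_linear_on (W:=V) F inv).
  { split; [|split].
    - intros f g Ff Fg. destruct (proj1 (Hrng f) Ff) as [a <-].
      destruct (proj1 (Hrng g) Fg) as [b <-]. rewrite <- Hadd, !Hinv; reflexivity.
    - intros k f Ff. destruct (proj1 (Hrng f) Ff) as [a <-].
      rewrite <- Hsmul, !Hinv; reflexivity.
    - intros S u Hsub Hb Hl. destruct (proj1 (Hrng u) (proj1 Hl)) as [u0 <-].
      rewrite Hinv.
      replace (image inv S) with (fun t => S (iota t)).
      + apply (tr_back V iota F Hrng Hadd Hinj); auto.
      + apply set_ext; intro y; split.
        * intro Sy. exists (iota y); split; [auto|rewrite Hinv; auto].
        * intros [s [Ss ->]]. destruct (proj1 (Hrng s) (Hsub s Ss)) as [t <-].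
          rewrite Hinv; auto. }
  destruct (Hker V inv HA) as [k Hk].
  exists (fun g => exists x, g = fun v => sm_smul V (iota v x) (k x)).
  split; [|split].
  - intros g [x ->]. exists (fun v => iota v x), (k x). split; [|reflexivity].
    split; [|split].
    + intros a b. rewrite Hadd; reflexivity.
    + intros c a. rewrite Hsmul; reflexivity.
    + intros T u Hb Hl.
      pose proof (Hemb (image iota T) (iota u)) as He.
      assert (Hs : subset_of (image iota T) F).
      { intros f [t [_ ->]]; apply Hin. }
      specialize (He Hs (tr_fwd_bdd V iota F Hrng Hadd Hinj T Hb)
                    (tr_fwd_lub V iota F Hrng Hadd Hinj T u Hl)).
      pose proof (pointwise_lub _ _ x He) as Hp.
      replace (image (fun v => iota v x) T) with
          (fun y => exists s, image iota T s /\ y = s x); [exact Hp|].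
      apply set_ext; intro y; split.
      * intros [s [[t [Tt ->]] ->]]. exists t; auto.
      * intros [t [Tt ->]]. exists (iota t); split; [exists t; auto|auto].
  - exists (fun v => v). intros g [x ->]. apply mple_iff; intro v.
    destruct (Hk (iota v) (Hin v)) as [_ [Hub _]]. rewrite Hinv in Hub.
    apply Hub. exists x; auto.
  - intro v. destruct (Hk (iota v) (Hin v)) as [_ Hl]. rewrite Hinv in Hl.
    replace (fun y => exists f, (exists x, f = fun v => sm_smul V (iota v x) (k x)) /\ y = f v)
      with (fun w => exists x, w = sm_smul V (iota v x) (k x)); [exact Hl|].
    apply set_ext; intro y; split.
    + intros [x ->]. eexists; split; [exists x; reflexivity|reflexivity].
    + intros [f [[x ->] ->]]. exists x; reflexivity.
Qed.

Definition Xn {K : BSemiring} (V : BSemimodule K) : Type :=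
  {p : (V -> K) * V | b_linear_functional (fst p) /\
                      forall v, ple (sm_add V) (sm_smul V (fst p v) (snd p)) v}.

Definition iotan {K : BSemiring} (V : BSemimodule K) (v : V) : Xn V -> K :=
  fun x => fst (proj1_sig x) v.

Lemma zero_blf {K : BSemiring} (V : BSemimodule K) :
  b_linear_functional (V:=V) (fun _ => sr_zero K).
Proof.
  split; [|split].
  - intros; rewrite sr_add_zero; reflexivity.
  - intros; rewrite sr_mul_zero_r; reflexivity.
  - intros S u _ _. split.
    + intros y [x [_ ->]]. unfold ple; apply sr_add_zero.
    + intros v _; unfold ple; apply sr_add_zero.
Qed.

Lemma bwd1 {K : BSemiring} (V : BSemimodule K) :
  b_nuclear_map (fun v : V => v) ->
  (exists (X : Type) (F : (X -> K) -> Prop) (iota : V -> X -> K),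
       inhabited X /\ functional_b_semimodule F /\ kernel_theorem_holds F /\ iso_onto F iota).
Proof.
  intros [S [HS [_ Hl]]].
  set (L := fun v : V => fun y => exists x : Xn V,
              y = sm_smul V (fst (proj1_sig x) v) (snd (proj1_sig x))).
  assert (HL : forall v, is_lub (sm_add V) (L v) v).
  { intro v. split.
    - intros y [x ->]. destruct x as [p [H0 H]]. simpl. apply H.
    - intros c Hc. destruct (Hl v) as [_ Hleast]. apply Hleast.
      intros y [f [Sf ->]]. destruct (HS f Sf) as (phi & w & Hphi & Hf).
      apply Hc.
      assert (Hx : b_linear_functional phi /\
                   forall v, ple (sm_add V) (sm_smul V (phi v) w) v).
      { split; auto. intro v'. rewrite <- Hf. destruct (Hl v') as [Hub _].
        apply Hub; exists f; auto. }
      exists (exist _ (phi, w) Hx). simpl. apply Hf. }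
  set (iota := iotan V).
  set (F := fun f : Xn V -> K => exists v, iota v = f).
  assert (Hrng : forall f, F f <-> exists v, iota v = f) by (intro; reflexivity).
  assert (Hadd : forall x y, iota (sm_add V x y) = fadd (iota x) (iota y)).
  { intros a b. apply functional_extensionality; intros [[phi w] [[Ha Hz1] Hz2]].
    unfold iota, iotan, fadd; simpl; apply Ha. }
  assert (Hsmul : forall (k : K) x, iota (sm_smul V k x) = fsmul k (iota x)).
  { intros k a. apply functional_extensionality; intros [[phi w] [[Hz0 [Hs Hz1]] Hz2]].
    unfold iota, iotan, fsmul; simpl; apply Hs. }
  assert (Hinj : forall v1 v2, iota v1 = iota v2 -> v1 = v2).
  { intros v1 v2 H.
    assert (E : L v1 = L v2).
    { apply set_ext; intro y; unfold L.
      assert (Hx : forall x : Xn V, fst (proj1_sig x) v1 = fst (proj1_sig x) v2)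
        by (intro x; exact (equal_f H x)).
      split; intros [x ->]; exists x; rewrite Hx; reflexivity. }
    pose proof (HL v1) as H1. rewrite E in H1.
    exact (lub_unique_g _ (@sm_add_comm K V) _ _ _ H1 (HL v2)). }
  exists (Xn V), F, iota. split; [|split; [|split]].
  - constructor. exists (fun _ => sr_zero K, sm_zero V). split.
    + apply zero_blf.
    + intro v; simpl. rewrite sm_smul_zero. unfold ple; apply sm_add_zero.
  - split; [|split; [|split; [|split; [|split]]]].
    + intros f g [a <-] [b <-]. exists (sm_add V a b); auto.
    + intros k f [a <-]. exists (sm_smul V k a); auto.
    + intros S0 Hsub Hb.
      destruct (@sm_bcomplete K V _ (tr_back_bdd V iota F Hrng Hadd Hinj S0 Hb)) as [u Hu].
      exists (iota u). rewrite <- (img_pre V iota F Hrng S0 Hsub).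
      apply (tr_fwd_lub V iota F Hrng Hadd Hinj); auto.
    + intros Q q f [v <-] HQ Hq.
      replace (image (fun a => fsmul a (iota v)) Q)
        with (image iota (image (fun a => sm_smul V a v) Q)).
      * rewrite <- Hsmul. apply (tr_fwd_lub V iota F Hrng Hadd Hinj).
        apply sm_lub_scal; auto.
      * apply set_ext; intro y; split.
        -- intros [t [[a [Qa ->]] ->]]. exists a; split; auto.
        -- intros [a [Qa ->]]. exists (sm_smul V a v); split; [exists a; auto|auto].
    + intros k S0 u Hsub Hb Hlu. destruct Hlu as [[u0 <-] Hlu'].
      assert (Hlu : lub_in F S0 (iota u0)) by (split; [exists u0; auto|exact Hlu']).
      pose proof (tr_back V iota F Hrng Hadd Hinj S0 u0 Hsub Hlu) as Ht.
      pose proof (tr_back_bdd V iota F Hrng Hadd Hinj S0 Hb) as Hbt.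
      pose proof (sm_lub_vec k Hbt Ht) as Hk.
      replace (image (fsmul k) S0) with
          (image iota (image (sm_smul V k) (fun t => S0 (iota t)))).
      * rewrite <- Hsmul. apply (tr_fwd_lub V iota F Hrng Hadd Hinj); auto.
      * apply set_ext; intro y; split.
        -- intros [t [[a [Ta ->]] ->]]. exists (iota a); split; [exact Ta|rewrite Hsmul; reflexivity].
        -- intros [s [Ss ->]]. destruct (proj1 (Hrng s) (Hsub s Ss)) as [a <-].
           exists (sm_smul V k a); split; [exists a; auto|rewrite Hsmul; reflexivity].
    + intros S0 u Hsub Hb Hlu. destruct Hlu as [[u0 <-] Hlu'].
      assert (Hlu : lub_in F S0 (iota u0)) by (split; [exists u0; auto|exact Hlu']).
      pose proof (tr_back V iota F Hrng Hadd Hinj S0 u0 Hsub Hlu) as Ht.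
      pose proof (tr_back_bdd V iota F Hrng Hadd Hinj S0 Hb) as Hbt.
      split; [exact (proj1 (proj2 Hlu))|].
      intros g Hg. apply fple_iff. intros [[phi w] [[Ha [Hs Hh]] Hle]].
      unfold iota, iotan; simpl.
      destruct (Hh _ u0 Hbt Ht) as [_ Hleast]. apply Hleast.
      intros y [t [Tt ->]].
      exact (proj1 (fple_iff _ _) (Hg (iota t) Tt) (exist _ (phi, w) (conj (conj Ha (conj Hs Hh)) Hle))).
  - intros W A [Aadd [Asm Ahom]].
    exists (fun x => A (iota (snd (proj1_sig x)))). intros f [v <-].
    replace (fun w => exists x, w = sm_smul W (iota v x) (A (iota (snd (proj1_sig x)))))
      with (image A (image iota (L v))).
    + assert (Hs : subset_of (image iota (L v)) F).
      { intros f [t [_ ->]]; exists t; auto. }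
      pose proof (Ahom _ _ Hs (tr_fwd_bdd V iota F Hrng Hadd Hinj _ (lub_bounded _ _ _ (HL v)))
                    (tr_fwd_lub V iota F Hrng Hadd Hinj _ _ (HL v))) as Hres.
      split; [exact (lub_bounded _ _ _ Hres)|exact Hres].
    + apply set_ext; intro y; split.
      * intros [s [[t [[x ->] ->]] ->]]. exists x.
        rewrite Hsmul, Asm; [reflexivity|exists (snd (proj1_sig x)); auto].
      * intros [x ->]. exists (iota (sm_smul V (fst (proj1_sig x) v) (snd (proj1_sig x)))).
        split.
        -- exists (sm_smul V (fst (proj1_sig x) v) (snd (proj1_sig x))); split; [exists x; auto|auto].
        -- rewrite Hsmul, Asm; [reflexivity|exists (snd (proj1_sig x)); auto].
  - split; [intro; exists v; auto|split; [intros f Ff; exact Ff|split; [exact Hinj|split; [exact Hadd|exact Hsmul]]]].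
Qed.

Theorem theorem7p32 (K : BSemiring) (V : BSemimodule K) :
  ((exists (X : Type) (F : (X -> K) -> Prop) (iota : V -> X -> K),
       inhabited X /\ functional_b_semimodule F /\ kernel_theorem_holds F /\ iso_onto F iota)
    <-> b_nuclear_map (fun v : V => v))
  /\ (b_nuclear_map (fun v : V => v) <-> b_nuclear_semimodule V).
Proof.
  split; split.
  - apply fwd1.
  - apply bwd1.
  - apply nuclear_id_all.
  - intro H. apply H, id_b_linear.
Qed.
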